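(* Let $\mathbf{T}\in\mathbb{R}^{d\times T}$ have full column rank $T$, let $1\le M<T$, let $\kappa>0$, and let $\mathbf{G}=\mathbf{T}^\top\mathbf{T}$ have eigenvalues $\lambda_1(\mathbf{G})\ge\dots\ge\lambda_T(\mathbf{G})$ with $\lambda_M(\mathbf{G})>\lambda_{M+1}(\mathbf{G})$. Let $S_\star\subseteq\mathbb{R}^T$ be the span of eigenvectors of $\mathbf{G}$ for the top $M$ eigenvalues. For $\mathbf{A}\in\mathbb{R}^{T\times M}$ let $\mathbf{W}_e(\mathbf{A})\in\mathbb{R}^{T\times M}$ be the matrix whose $m$-th column is $\mathrm{softmax}(\mathbf{A}_{:,m}/\kappa)$. Then there exist $\mathbf{A}\in\mathbb{R}^{T\times M}$ and $\mathbf{W}_d\in\mathbb{R}^{M\times T}$ with $$\|\mathbf{T}\mathbf{W}_e(\mathbf{A})\mathbf{W}_d-\mathbf{T}\|_F^2=\sum_{i=M+1}^{T}\lambda_i(\mathbf{G})$$ (i.e., the softmax-encoder linear autoencoder attains the optimal rank-$M$ reconstruction error) if and only if there exist $M$ linearly independent vectors $x_1,\dots,x_M\in S_\star$ all of whose coordinates are strictly positive.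
   Context: $\mathrm{softmax}(z)_i=e^{z_i}/\sum_j e^{z_j}$. $\|\cdot\|_F$ is the Frobenius norm. For every $\mathbf{W}_e,\mathbf{W}_d$ of these shapes, $\|\mathbf{T}\mathbf{W}_e\mathbf{W}_d-\mathbf{T}\|_F^2\ge\sum_{i=M+1}^T\lambda_i(\mathbf{G})$ (the Eckart–Young bound), so the claim characterizes when this lower bound is achieved with a softmax-activated encoder. *)

(* Defs.v *)
From HB Require Import structures.
From mathcomp Require Import all_boot all_order all_algebra.
From mathcomp Require Import all_classical all_reals all_analysis.
Set Implicit Arguments. Unset Strict Implicit. Unset Printing Implicit Defensive.
Import Order.TTheory GRing.Theory Num.Theory.
Local Open Scope ring_scope.

Definition frob2 {R : realType} {m n : nat} (X : 'M[R]_(m, n)) : R :=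
  \sum_(i < m) \sum_(j < n) X i j ^+ 2.

Definition softmax_enc {R : realType} {T M : nat} (kappa : R) (A : 'M[R]_(T, M))
  : 'M[R]_(T, M) :=
  \matrix_(i < T, m < M)
    (expR (A i m / kappa) / \sum_(k < T) expR (A k m / kappa)).

(* S_star: span (row space) of the eigenvectors of G for the top M eigenvalues
   lam 0, ..., lam (M-1) (0-indexed) *)
Definition top_eigenspace {R : realType} {T : nat} (G : 'M[R]_T) (lam : 'I_T -> R)
  (M : nat) : 'M[R]_T :=
  (\sum_(i < T | (i < M)%N) eigenspace G (lam i))%MS.

(* Main.v *)
Require Import Defs.
From HB Require Import structures.
From mathcomp Require Import all_boot all_order all_algebra.
From mathcomp Require Import all_classical all_reals all_analysis.
From mathcomp Require Import zify ring lra.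
Import Order.TTheory GRing.Theory Num.Theory.
Local Open Scope ring_scope.

Set Implicit Arguments. Unset Strict Implicit. Unset Printing Implicit Defensive.

Section Gen.
Variable R : realFieldType.

Lemma tr_AAt m n (A : 'M[R]_(m, n)) :
  \tr (A *m A^T) = \sum_(i < m) \sum_(j < n) A i j ^+ 2.
Proof.
rewrite /mxtrace; apply: eq_bigr => i _; rewrite mxE.
by apply: eq_bigr => j _; rewrite mxE expr2.
Qed.

Lemma tr_AAt_ge0 m n (A : 'M[R]_(m, n)) : 0 <= \tr (A *m A^T).
Proof.
by rewrite tr_AAt; apply: sumr_ge0 => i _; apply: sumr_ge0 => j _; apply: sqr_ge0.
Qed.

Lemma tr_AAt_eq0 m n (A : 'M[R]_(m, n)) : \tr (A *m A^T) = 0 -> A = 0.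
Proof.
rewrite tr_AAt => /eqP; rewrite psumr_eq0; last first.
  by move=> i _; apply: sumr_ge0 => j _; apply: sqr_ge0.
move=> /allP H; apply/matrixP => i j; rewrite mxE.
have /H : i \in index_enum 'I_m by rewrite mem_index_enum.
rewrite /= psumr_eq0; last by move=> k _; apply: sqr_ge0.
move=> /allP /(_ j (mem_index_enum _)) /=.
by rewrite sqrf_eq0 => /eqP.
Qed.

Lemma AAt_unit m n (Z : 'M[R]_(m, n)) : row_free Z -> Z *m Z^T \in unitmx.
Proof.
move=> fZ; rewrite -row_free_unit /row_free.
have K0 : kermx (Z *m Z^T) = 0.
  set K := kermx _.
  have KZ : K *m (Z *m Z^T) = 0 by apply/sub_kermxP.
  have : (K *m Z) *m (K *m Z)^T = 0.
    by rewrite trmx_mul mulmxA -(mulmxA K) KZ mul0mx.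
  move=> H; have : K *m Z = 0 by apply: tr_AAt_eq0; rewrite H linear0.
  by move/eqP; rewrite mulmx_free_eq0 // => /eqP.
have := mxrank_ker (Z *m Z^T); rewrite K0 mxrank0 => /esym/eqP.
rewrite subn_eq0 => H; rewrite eqn_leq H rank_leq_row.
by [].
Qed.

Definition proj m n (Z : 'M[R]_(m, n)) : 'M[R]_n :=
  Z^T *m invmx (Z *m Z^T) *m Z.

Section Proj.
Variables (m n : nat) (Z : 'M[R]_(m, n)).
Hypothesis fZ : row_free Z.

Lemma proj_tr : (proj Z)^T = proj Z.
Proof.
rewrite /proj !trmx_mul trmxK mulmxA; congr (_ *m _ *m _).
by rewrite trmx_inv trmx_mul trmxK.
Qed.

Lemma proj_fix p (A : 'M[R]_(p, n)) : (A <= Z)%MS -> A *m proj Z = A.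
Proof.
move=> /submxP [D ->]; rewrite /proj !mulmxA -(mulmxA D Z Z^T).
by rewrite mulmxK ?AAt_unit.
Qed.

Lemma proj_sub : (proj Z <= Z)%MS.
Proof. by rewrite /proj submxMl. Qed.

Lemma proj_idem : proj Z *m proj Z = proj Z.
Proof. by rewrite proj_fix // proj_sub. Qed.

Lemma proj_kill p (A : 'M[R]_(p, n)) : A *m Z^T = 0 -> A *m proj Z = 0.
Proof. by move=> H; rewrite /proj !mulmxA H !mul0mx. Qed.

Lemma proj_trace : \tr (proj Z) = m%:R.
Proof.
rewrite /proj mxtrace_mulC mulmxA mulmxV ?AAt_unit //.
by rewrite mxtrace1.
Qed.
End Proj.

Lemma proj_uniq m1 m2 n (Z1 : 'M[R]_(m1, n)) (Z2 : 'M[R]_(m2, n)) :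
  row_free Z1 -> row_free Z2 -> (Z1 == Z2)%MS -> proj Z1 = proj Z2.
Proof.
move=> f1 f2 /andP [s12 s21].
have e1 : proj Z1 *m proj Z2 = proj Z1.
  by rewrite proj_fix //; apply: submx_trans s12; apply: proj_sub.
have e2 : proj Z2 *m proj Z1 = proj Z2.
  by rewrite proj_fix //; apply: submx_trans s21; apply: proj_sub.
by rewrite -[LHS]proj_tr // -e1 trmx_mul !proj_tr // e2.
Qed.

Lemma ortho_eig n (G : 'M[R]_n) m1 m2 (A : 'M[R]_(m1, n)) (B : 'M[R]_(m2, n)) a b :
  G^T = G -> A *m G = a *: A -> B *m G = b *: B -> a != b -> A *m B^T = 0.
Proof.
move=> sG hA hB ab.
have : a *: (A *m B^T) = b *: (A *m B^T).
  rewrite scalemxAl -hA -mulmxA -{1}sG -trmx_mul hB.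
  by rewrite linearZ /= scalemxAr.
move/eqP; rewrite -subr_eq0 -scalerBl scaler_eq0 subr_eq0 (negPf ab) /=.
by move/eqP.
Qed.

End Gen.

Section Diag.
Variable R : realFieldType.

Lemma horner_mx_tr n' (A : 'M[R]_(n'.+1)) p :
  (horner_mx A p)^T = horner_mx A^T p.
Proof.
elim/poly_ind: p => [|p c IH]; first by rewrite !rmorph0 linear0.
rewrite !rmorphD !rmorphM /= !horner_mx_X !horner_mx_C linearD /=.
rewrite tr_scalar_mx; congr (_ + _).
rewrite -!mulmxE trmx_mul IH.
by have := comm_mx_horner p (comm_mx_refl A^T); rewrite /comm_mx => ->.
Qed.

Lemma sym_expr n' (H : 'M[R]_(n'.+1)) j : H^T = H -> (H ^+ j)^T = H ^+ j.
Proof.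
move=> sH; elim: j => [|j IH]; first by rewrite !expr0 trmx1.
rewrite exprS -mulmxE trmx_mul IH sH mulmxE -exprSr exprS.
by [].
Qed.

Lemma sym_nilp n' (H : 'M[R]_(n'.+1)) k : H^T = H -> H ^+ k = 0 -> H = 0.
Proof.
move=> sH; elim: k {-2}k (leqnn k) => [|K IH] k lek Hk.
  move: lek; rewrite leqn0 => /eqP k0; move: Hk; rewrite k0 expr0 => /eqP.
  by rewrite oner_eq0.
case: k lek Hk => [|[|j]] lek Hk.
- by move: Hk => /eqP; rewrite expr0 oner_eq0.
- by rewrite -(expr1 H).
- apply: (IH j.+1); first by rewrite -ltnS.
  have H2 : H ^+ (j.+1 + j.+1) = 0.
    have -> : (j.+1 + j.+1 = j.+2 + j)%N by rewrite addSn addnS.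
    by rewrite exprD Hk mul0r.
  apply: tr_AAt_eq0; rewrite sym_expr // mulmxE -exprD H2.
  by rewrite linear0.
Qed.

Lemma char_poly_conj n (W A : 'M[R]_n) : W \in unitmx ->
  char_poly (W *m A *m invmx W) = char_poly A.
Proof.
move=> uW; rewrite /char_poly /char_poly_mx !map_mxM.
set Wf := map_mx _ W; set Af := map_mx _ A; set Vf := map_mx _ (invmx W).
have WV : Wf *m Vf = 1%:M by rewrite /Wf /Vf -map_mxM mulmxV // map_mx1.
have e : 'X%:M - Wf *m Af *m Vf = Wf *m ('X%:M - Af) *m Vf.
  rewrite mulmxBr mulmxBl mul_mx_scalar -scalemxAl WV scalemx1.
  by [].
rewrite e !det_mulmx mulrC mulrA -det_mulmx mulmxE.
have -> : (Vf * Wf) = 1%:M.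
  by apply/eqP; rewrite -mulmxE mulmx1C // -WV.
by rewrite det1 mul1r.
Qed.

End Diag.

Section Diag2.
Variable R : realFieldType.

Lemma offdiag0 n (D : 'M[R]_n) : (forall i j : 'I_n, i != j :> nat -> D i j = 0) ->
  D = diag_mx (\row_k D k k).
Proof.
move=> offD; apply/matrixP => i j; rewrite !mxE; have [ij|ij] := eqVneq i j.
  by rewrite ij mulr1n.
by rewrite mulr0n offD // (inj_eq val_inj) ij.
Qed.

Lemma sym_diag n' (G : 'M[R]_(n'.+1)) (lam : 'I_(n'.+1) -> R) :
  G^T = G -> char_poly G = \prod_(i < n'.+1) ('X - (lam i)%:P) ->
  exists W (d : 'rV[R]_(n'.+1)), [/\ W \in unitmx, W *m G = diag_mx d *m W &
    perm_eq [seq d 0 k | k <- index_enum 'I_(n'.+1)] [seq lam i | i <- index_enum 'I_(n'.+1)]].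
Proof.
move=> sG cG.
set ls := [seq lam i | i <- index_enum 'I_(n'.+1)].
set p := \prod_(x <- undup ls) ('X - x%:P).
set H := horner_mx G p.
have dv : char_poly G %| \prod_(i < n'.+1) p.
  rewrite cG; apply: (big_ind2 (fun a b => a %| b)) => //.
    by move=> x1 x2 y1 y2 h1 h2; apply: dvdp_mul.
  move=> i _; rewrite dvdp_XsubCl root_prod_XsubC mem_undup.
  by apply: map_f; rewrite mem_index_enum.
have H0 : H = 0.
  apply: (sym_nilp (k := n'.+1)); first by rewrite /H horner_mx_tr sG.
  have : horner_mx G (\prod_(i < n'.+1) p) = 0.
    move: dv; rewrite dvdp_eq => /eqP ->.
    by rewrite rmorphM /= Cayley_Hamilton mulr0.
  by rewrite rmorph_prod /= prodr_const card_ord.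
have [W uW sim] : exists2 W, (W : 'M[R]_(n'.+1)) \in unitmx & similar_diag W G.
  apply/diagonalizableP; exists (undup ls); first exact: undup_uniq.
  by apply: mxminpoly_min.
set D := W *m G *m invmx W.
have offD := (similar_diagP _ uW sim).
exists W, (\row_k D k k).
have eD : D = diag_mx (\row_k D k k) by apply: offdiag0.
split => //.
  by rewrite -eD /D mulmxKV.
apply: prod_XsubC_eq; rewrite !big_map -cG -(char_poly_conj G uW) -/D.
have -> : char_poly D = char_poly (diag_mx (\row_k D k k)) by rewrite -eD.
rewrite (char_poly_trig (is_diag_mx_is_trig (diag_mx_is_diag (\row_k D k k)))).
by apply: eq_bigr => k _; rewrite !mxE eqxx mulr1n.
Qed.

End Diag2.

Section Gen4.
Variable R : realFieldType.

Lemma sum_eq_ind (s : seq R) x : uniq s -> x \in s ->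
  \sum_(a <- s) (x == a)%:R = 1 :> R.
Proof.
elim: s => [//|y s IH] /= /andP [ys us]; rewrite inE big_cons.
have [->|xy] /= := eqVneq x y.
  move=> _; rewrite big1_seq ?addr0 // => a /= as_.
  by case: eqP => // ya; move: ys; rewrite ya as_.
by move=> xs; rewrite add0r IH.
Qed.

Lemma quad_gen n (G : 'M[R]_n) p (V : seq R) (U : R -> 'M[R]_(p, n)) t :
  uniq V -> (forall a, U a *m G = a *: U a) ->
  (forall a b, a != b -> U a *m (U b)^T = 0) ->
  \tr ((\sum_(a <- V) U a) *m (G - t%:M) *m (\sum_(a <- V) U a)^T)
   = \sum_(a <- V) (a - t) * \tr (U a *m (U a)^T).
Proof.
move=> uV UG Uo.
rewrite mulmx_suml linear_sum /= mulmx_suml linear_sum /=.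
apply: eq_big_seq => a aV.
rewrite mulmxBr UG mul_mx_scalar -scalerBl -scalemxAl mulmx_sumr.
rewrite (bigD1_seq a) //= big1_seq ?addr0 ?mxtraceZ //.
by move=> b /andP [ba _]; rewrite Uo // eq_sym.
Qed.

Lemma sum_orth n p (V : seq R) (U : R -> 'M[R]_(p, n)) a :
  uniq V -> a \in V -> (forall a b, a != b -> U a *m (U b)^T = 0) ->
  U a *m (\sum_(b <- V) U b)^T = U a *m (U a)^T.
Proof.
move=> uV aV Uo; rewrite linear_sum mulmx_sumr (bigD1_seq a) //= big1_seq ?addr0 //.
by move=> b /andP [ba _]; rewrite Uo // eq_sym.
Qed.

End Gen4.

Section Spectral.
Variable R : realFieldType.
Variables (n : nat) (G : 'M[R]_n) (lam : 'I_n -> R) (M : nat) (c c' : R).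
Variables (W : 'M[R]_n) (d : 'rV[R]_n).
Hypothesis sG : G^T = G.
Hypothesis uW : W \in unitmx.
Hypothesis WG : W *m G = diag_mx d *m W.
Hypothesis pd : perm_eq [seq d 0 k | k <- index_enum 'I_n] [seq lam i | i <- index_enum 'I_n].
Hypothesis lam_top : forall i : 'I_n, (i < M)%N -> c <= lam i.
Hypothesis lam_bot : forall i : 'I_n, (M <= i)%N -> lam i <= c'.
Hypothesis gap : c' < c.
Hypothesis leMn : (M <= n)%N.

Let S := (\sum_(i < n | (i < M)%N) eigenspace G (lam i))%MS.
Let Y := row_base S.
Let P := proj Y.
Let fY : row_free Y. Proof. exact: row_base_free. Qed.

Lemma dk_lam k : exists i, d 0 k = lam i.
Proof.
have : d 0 k \in [seq lam i | i <- index_enum 'I_n].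
  by rewrite -(perm_mem pd); apply: map_f; rewrite mem_index_enum.
by move=> /mapP [i _ ->]; exists i.
Qed.

Lemma dk_top k : c <= d 0 k -> exists2 i : 'I_n, (i < M)%N & d 0 k = lam i.
Proof.
have [i ->] := dk_lam k => ci; exists i => //.
rewrite ltnNge; apply/negP => /lam_bot; rewrite leNgt.
by rewrite (lt_le_trans gap ci).
Qed.

Lemma dk_bot k : d 0 k < c -> exists2 i : 'I_n, (M <= i)%N & d 0 k = lam i.
Proof.
have [i ->] := dk_lam k => ci; exists i => //.
rewrite leqNgt; apply/negP => /lam_top; rewrite leNgt.
by rewrite ci.
Qed.

Lemma dk_cases k : d 0 k < c -> d 0 k <= c'.
Proof. by move=> /dk_bot [i /lam_bot Hi ->]. Qed.

Lemma w_eig k : row k W *m G = d 0 k *: row k W.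
Proof. by rewrite -row_mul WG row_mul row_diag_mx -scalemxAl -rowE. Qed.

Lemma row_in_S k : c <= d 0 k -> (row k W <= S)%MS.
Proof.
move=> /dk_top [i iM ei]; apply: (sumsmx_sup i) => //.
by apply/eigenspaceP; rewrite w_eig ei.
Qed.

Lemma row_perp k : d 0 k < c -> row k W *m Y^T = 0.
Proof.
move=> dc.
have : (Y <= S)%MS by rewrite eq_row_base.
move=> /sub_sumsmxP [u ->]; rewrite linear_sum mulmx_sumr big1 // => i iM.
apply: (ortho_eig (G := G) (a := d 0 k) (b := lam i)) => //.
  exact: w_eig.
  by apply/eigenspaceP; apply: submxMl.
by apply/eqP => e; move: dc; rewrite e ltNge lam_top.
Qed.

Let mk := \row_k ((c <= d 0 k)%R%:R : R).

Lemma WP : W *m P = diag_mx mk *m W.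
Proof.
apply/row_matrixP => k; rewrite !row_mul row_diag_mx -scalemxAl -rowE mxE.
have [ck|ck] := leP c (d 0 k).
  rewrite scale1r proj_fix //; apply: submx_trans (row_in_S ck) _.
  by rewrite eq_row_base.
by rewrite scale0r proj_kill // row_perp.
Qed.

Lemma P_eq : P = invmx W *m diag_mx mk *m W.
Proof. by rewrite -mulmxA -WP mulKmx. Qed.

Lemma G_eq : G = invmx W *m diag_mx d *m W.
Proof. by rewrite -mulmxA -WG mulKmx. Qed.

Lemma tr_conj (A : 'M[R]_n) : \tr (invmx W *m A *m W) = \tr A.
Proof. by rewrite -mulmxA mxtrace_mulC mulmxK. Qed.

Lemma PG : P *m G = G *m P.
Proof.
have hc : diag_mx mk *m diag_mx d = diag_mx d *m diag_mx mk.
  by rewrite !mulmx_diag; congr diag_mx; apply/rowP => j; rewrite !mxE mulrC.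
rewrite P_eq G_eq !mulmxA !(mulmxK uW) -(mulmxA (invmx W) (diag_mx mk)) hc.
by rewrite mulmxA.
Qed.

Lemma P_sym : P^T = P. Proof. exact: proj_tr. Qed.
Lemma P_idem : P *m P = P. Proof. exact: proj_idem. Qed.

Lemma sum_lam_pred (F : R -> R) :
  \sum_(k < n) F (d 0 k) = \sum_(i < n) F (lam i).
Proof.
have := perm_big (op := +%R) (x := 0) (F := F) (P := xpredT) _ pd.
by rewrite !big_map.
Qed.

Lemma trP : \tr P = M%:R.
Proof.
rewrite P_eq tr_conj mxtrace_diag.
under eq_bigr do rewrite mxE.
rewrite (sum_lam_pred (fun x => (c <= x)%R%:R)).
rewrite (eq_bigr (fun i : 'I_n => if (i < M)%N then 1 else 0)); last first.
  move=> i _; have [iM|iM] := ltnP i M; first by rewrite lam_top.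
  by rewrite leNgt (le_lt_trans (lam_bot iM) gap).
rewrite -big_mkcond /= (big_ord_narrow leMn) /= sumr_const card_ord.
by [].
Qed.

Lemma rankS : \rank S = M.
Proof.
apply/eqP; rewrite -(eqr_nat R) -trP /P proj_trace //.
Qed.

Lemma trGQ : \tr (G *m (1%:M - P)) = \sum_(i < n | (M <= i)%N) lam i.
Proof.
rewrite mulmxBr mulmx1 linearB /= P_eq G_eq.
rewrite !mulmxA (mulmxK uW) tr_conj -(mulmxA (invmx W) (diag_mx d) (diag_mx mk)) tr_conj.
rewrite mulmx_diag !mxtrace_diag -sumrB.
rewrite (eq_bigr (fun k => d 0 k - d 0 k * (c <= d 0 k)%R%:R)); last by move=> k _; rewrite !mxE.
rewrite (sum_lam_pred (fun x => x - x * (c <= x)%R%:R)) [RHS]big_mkcond /=.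
apply: eq_bigr => i _; have [iM|iM] := ltnP i M.
  by rewrite (lam_top iM) mulr1 subrr.
by rewrite leNgt (le_lt_trans (lam_bot iM) gap) mulr0 subr0.
Qed.

Let V := undup [seq d 0 k | k <- index_enum 'I_n].
Let Ea a := diag_mx (\row_k ((d 0 k == a)%:R : R)).
Let U p (Y' : 'M[R]_(p, n)) a := Y' *m invmx W *m Ea a *m W.

Lemma uV : uniq V. Proof. exact: undup_uniq. Qed.

Lemma V_d a : a \in V -> exists k, a = d 0 k.
Proof. by rewrite mem_undup => /mapP [k _ ->]; exists k. Qed.

Lemma Ea_d a : Ea a *m diag_mx d = a *: Ea a.
Proof.
rewrite mulmx_diag; apply/matrixP => i j; rewrite !mxE.
case: (i == j); rewrite ?mulr1n ?mulr0n ?mulr0 //.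
by case: eqP => [->|_]; rewrite ?mul1r ?mulr1 ?mul0r ?mulr0.
Qed.

Lemma Ea_mk a : Ea a *m diag_mx mk = (c <= a)%R%:R *: Ea a.
Proof.
rewrite mulmx_diag; apply/matrixP => i j; rewrite !mxE.
case: (i == j); rewrite ?mulr1n ?mulr0n ?mulr0 //.
by case: eqP => [->|_]; rewrite ?mul1r ?mulr1 ?mul0r ?mulr0 // mulrC.
Qed.

Lemma Ea_sum : \sum_(a <- V) Ea a = 1%:M.
Proof.
apply/matrixP => i j; rewrite summxE !mxE.
under eq_bigr do rewrite !mxE.
case: (i == j); last by rewrite big1.
under eq_bigr do rewrite mulr1n.
rewrite sum_eq_ind ?uV //.
by rewrite mem_undup; apply: map_f; rewrite mem_index_enum.
Qed.

Section UY.
Variables (p : nat) (Y' : 'M[R]_(p, n)).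

Lemma U_G a : U Y' a *m G = a *: U Y' a.
Proof.
rewrite /U -mulmxA WG mulmxA -(mulmxA _ (Ea a)) Ea_d.
by rewrite -scalemxAr -scalemxAl.
Qed.

Lemma U_P a : U Y' a *m P = (c <= a)%R%:R *: U Y' a.
Proof.
rewrite /U -mulmxA WP mulmxA -(mulmxA _ (Ea a)) Ea_mk.
by rewrite -scalemxAr -scalemxAl.
Qed.

Lemma U_sum : \sum_(a <- V) U Y' a = Y'.
Proof.
rewrite /U -mulmx_suml -mulmx_sumr Ea_sum mulmx1 mulmxKV //.
Qed.

Lemma U_orth a b : a != b -> U Y' a *m (U Y' b)^T = 0.
Proof. by move=> ab; apply: (ortho_eig sG (U_G a) (U_G b)). Qed.

Lemma quad t : \tr (Y' *m (G - t%:M) *m Y'^T)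
   = \sum_(a <- V) (a - t) * \tr (U Y' a *m (U Y' a)^T).
Proof.
have h := quad_gen t uV U_G U_orth.
by rewrite U_sum in h.
Qed.

Lemma U_self a : a \in V -> U Y' a *m Y'^T = U Y' a *m (U Y' a)^T.
Proof.
move=> aV; have h := sum_orth uV aV U_orth.
by rewrite U_sum in h.
Qed.

Lemma K3 : Y' *m P = Y' -> 0 <= \tr (Y' *m (G - c%:M) *m Y'^T).
Proof.
move=> hY; rewrite quad big_seq; apply: sumr_ge0 => a aV.
have [ca|ca] := leP c a.
  by apply: mulr_ge0; [rewrite subr_ge0 | exact: tr_AAt_ge0].
have -> : U Y' a *m (U Y' a)^T = 0.
  rewrite -U_self // -{2}hY trmx_mul P_sym mulmxA U_P.
  by rewrite leNgt ca scale0r mul0mx.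
by rewrite linear0 mulr0.
Qed.

Lemma K4 : Y' *m P = 0 -> \tr (Y' *m (G - c'%:M) *m Y'^T) <= 0.
Proof.
move=> hY; rewrite quad big_seq; apply: sumr_le0 => a aV.
have [ca|ca] := leP c a.
  have -> : U Y' a *m (U Y' a)^T = 0.
    rewrite -U_self //.
    have -> : U Y' a = U Y' a *m P by rewrite U_P ca scale1r.
    by rewrite -mulmxA -P_sym -trmx_mul hY trmx0 mulmx0.
  by rewrite linear0 mulr0.
apply: mulr_le0_ge0; last exact: tr_AAt_ge0.
have [k ak] := V_d aV; rewrite subr_le0 ak; apply: dk_cases.
by rewrite -ak.
Qed.
End UY.

Lemma d_ge0 : (forall v : 'rV[R]_n, 0 <= \tr (v *m G *m v^T)) ->
  forall k, 0 <= d 0 k.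
Proof.
move=> psd k; have := psd (row k W); rewrite w_eig -scalemxAl mxtraceZ.
have wn0 : row k W != 0.
  apply/eqP => w0.
  have : row k (W *m invmx W) = row k 1%:M by rewrite mulmxV.
  rewrite row_mul w0 mul0mx row1 => /matrixP /(_ 0 k); rewrite !mxE eqxx /=.
  by rewrite eqxx => /eqP; rewrite eq_sym oner_eq0.
have tp : 0 < \tr (row k W *m (row k W)^T).
  rewrite lt_def tr_AAt_ge0 andbT; apply/eqP => h.
  by move: wn0; rewrite (tr_AAt_eq0 h) eqxx.
by rewrite pmulr_lge0.
Qed.

Lemma lam_ge0 : (forall v : 'rV[R]_n, 0 <= \tr (v *m G *m v^T)) ->
  forall i, 0 <= lam i.
Proof.
move=> psd i.
have : lam i \in [seq d 0 k | k <- index_enum 'I_n].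
  by rewrite (perm_mem pd); apply: map_f; rewrite mem_index_enum.
by move=> /mapP [k _ ->]; apply: d_ge0.
Qed.

Lemma PS : (P == S)%MS.
Proof.
apply/andP; split.
  by apply: submx_trans (@proj_sub R _ _ Y) _; rewrite eq_row_base.
by rewrite -(eq_row_base S); apply/submxP; exists Y; rewrite -/Y -/P proj_fix.
Qed.

End Spectral.

Section G5.
Variable R : realFieldType.
Lemma split_sym m n (E : 'M[R]_(m, n)) (Pi : 'M[R]_n) :
  Pi^T = Pi -> Pi *m Pi = Pi ->
  E *m E^T = (E *m Pi) *m (E *m Pi)^T + (E *m (1%:M - Pi)) *m (E *m (1%:M - Pi))^T.
Proof.
move=> sP iP.
have sQ : (1%:M - Pi)^T = 1%:M - Pi by rewrite linearB /= trmx1 sP.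
have iQ : (1%:M - Pi) *m (1%:M - Pi) = 1%:M - Pi.
  by rewrite mulmxBr mulmx1 mulmxBl mul1mx iP subrr subr0.
rewrite !trmx_mul sP sQ !mulmxA -!(mulmxA E) iP iQ.
rewrite -mulmxDr -mulmxDl addrC subrK mul1mx.
by [].
Qed.
Lemma XcX m0 (X G0 : 'M[R]_m0) t : X *m X = X -> X *m G0 = G0 *m X ->
  X *m (G0 - t%:M) *m X = G0 *m X - t *: X.
Proof.
move=> iX XG; rewrite mulmxBr mulmxBl XG -(mulmxA G0 X X) iX mul_mx_scalar -scalemxAl iX.
by [].
Qed.
Lemma tr_sand m0 (X Pi : 'M[R]_m0) : Pi *m Pi = Pi -> \tr (Pi *m X *m Pi) = \tr (X *m Pi).
Proof. by move=> iPi; rewrite mxtrace_mulC mulmxA iPi mxtrace_mulC. Qed.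
End G5.
Section Core2.
Variable R : realFieldType.
Variables (dd n M : nat) (Tm : 'M[R]_(dd, n)) (P : 'M[R]_n) (c c' target : R).
Let G := Tm^T *m Tm.
Hypotheses (fT : row_full Tm) (sP : P^T = P) (iP : P *m P = P) (PG : P *m G = G *m P)
  (trP : \tr P = M%:R) (trGQ : \tr (G *m (1%:M - P)) = target)
  (K3 : forall p (Y' : 'M[R]_(p, n)), Y' *m P = Y' -> 0 <= \tr (Y' *m (G - c%:M) *m Y'^T))
  (K4 : forall p (Y' : 'M[R]_(p, n)), Y' *m P = 0 -> \tr (Y' *m (G - c'%:M) *m Y'^T) <= 0)
  (gap : c' < c) (c'0 : 0 <= c').

Lemma fwd (We : 'M[R]_(n, M)) (Wd : 'M[R]_(M, n)) :
  \tr ((Tm *m We *m Wd - Tm) *m (Tm *m We *m Wd - Tm)^T) = target ->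
  (P <= We^T)%MS.
Proof.
move=> hE.
set B := We *m Wd.
have eE : Tm *m We *m Wd - Tm = Tm *m (B - 1%:M) by rewrite mulmxBr mulmx1 mulmxA.
rewrite eE in hE.
have eB : B = We *m Wd by [].
clearbody B.
set K := kermx B^T; set Z := row_base K; set Pi := proj Z.
have fZ : row_free Z by apply: row_base_free.
have sPi : Pi^T = Pi by apply: proj_tr.
have iPi : Pi *m Pi = Pi by apply: proj_idem.
have BPi : B *m Pi = 0.
  have : Pi *m B^T = 0.
    apply/sub_kermxP; apply: submx_trans (@proj_sub R _ _ Z) _.
    by rewrite eq_row_base.
  by move=> /(congr1 trmx); rewrite trmx_mul trmxK sPi trmx0.
have trPi : \tr Pi = (\rank K)%:R by apply: proj_trace.
clearbody Pi.
have rK : (n <= \rank K + M)%N.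
  rewrite /K mxrank_ker mxrank_tr.
  have : (\rank B <= M)%N.
    by rewrite eB; apply: leq_trans (mxrankM_maxl _ _) (rank_leq_col _).
  have : (\rank B <= n)%N by apply: rank_leq_row.
  lia.
set Q := 1%:M - P.
have sQ : Q^T = Q by rewrite linearB /= trmx1 sP.
have iQ : Q *m Q = Q by rewrite mulmxBr mulmx1 mulmxBl mul1mx iP subrr subr0.
have QG : Q *m G = G *m Q by rewrite mulmxBl mulmxBr mul1mx mulmx1 PG.
set X2 := Tm *m (B - 1%:M) *m (1%:M - Pi).
have e1 : \tr (Tm *m (B - 1%:M) *m (Tm *m (B - 1%:M))^T) = \tr (G *m Pi) + \tr (X2 *m X2^T).
  rewrite (split_sym _ sPi iPi) linearD /=; congr (_ + _).
  have -> : Tm *m (B - 1%:M) *m Pi = - (Tm *m Pi).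
    by rewrite -mulmxA mulmxBl BPi mul1mx sub0r mulmxN.
  rewrite linearN /= mulNmx mulmxN opprK trmx_mul sPi mulmxA -(mulmxA Tm Pi Pi) iPi.
  by rewrite mxtrace_mulC mulmxA.
have QP : Q *m P = 0 by rewrite /Q mulmxBl mul1mx iP subrr.
have trQ : \tr Q = n%:R - M%:R by rewrite /Q linearB /= mxtrace1 trP.
have trQPi : \tr (Q *m Pi) = \tr Pi - \tr (P *m Pi) by rewrite /Q mulmxBl mul1mx linearB.
have GPQ : \tr (G *m Pi) = \tr (G *m P *m Pi) + \tr (G *m Q *m Pi).
  by rewrite -linearD /= -mulmxDl -mulmxDr /Q addrC subrK mulmx1.
have trGQ' : \tr (G *m Q) = target by [].
clearbody Q.
have PcP := XcX c iP PG.
have QcQ := XcX c' iQ QG.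
set Y1 := Pi *m P.
have hY1 : Y1 *m P = Y1 by rewrite /Y1 -mulmxA iP.
have t1E : \tr (Y1 *m (G - c%:M) *m Y1^T) = \tr (G *m P *m Pi) - c * \tr (P *m Pi).
  have -> : Y1 *m (G - c%:M) *m Y1^T = Pi *m (P *m (G - c%:M) *m P) *m Pi.
    by rewrite /Y1 trmx_mul sP sPi !mulmxA.
  by rewrite tr_sand // PcP mulmxBl linearB /= -scalemxAl mxtraceZ.
set Pi' := 1%:M - Pi.
have iPi' : Pi' *m Pi' = Pi'.
  by rewrite /Pi' mulmxBr mulmx1 mulmxBl mul1mx iPi subrr subr0.
have sPi' : Pi'^T = Pi' by rewrite /Pi' linearB /= trmx1 sPi.
have trPi' : forall X : 'M[R]_n, \tr (X *m Pi') = \tr X - \tr (X *m Pi).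
  by move=> X; rewrite /Pi' mulmxBr mulmx1 linearB.
clearbody Pi'.
set Y2 := Pi' *m Q.
have hY2 : Y2 *m P = 0 by rewrite /Y2 -mulmxA QP mulmx0.
have t2E : \tr (Y2 *m (G - c'%:M) *m Y2^T) = \tr (G *m Q) - \tr (G *m Q *m Pi) - c' * (\tr Q - \tr (Q *m Pi)).
  have -> : Y2 *m (G - c'%:M) *m Y2^T = Pi' *m (Q *m (G - c'%:M) *m Q) *m Pi'.
    by rewrite /Y2 trmx_mul sQ sPi' !mulmxA.
  rewrite tr_sand // QcQ mulmxBl linearB /= -scalemxAl mxtraceZ !trPi'.
  by [].
have h1 := K3 hY1; rewrite t1E in h1.
have h2 := K4 hY2; rewrite t2E in h2.
have h3 := tr_AAt_ge0 X2.
have trPP : \tr ((Pi *m P) *m (Pi *m P)^T) = \tr (P *m Pi).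
  by rewrite trmx_mul sP sPi !mulmxA -(mulmxA Pi P P) iP (tr_sand P iPi).
have h4 : 0 <= \tr (P *m Pi) by rewrite -trPP; apply: tr_AAt_ge0.
have h5 : 0 <= (c - c') * \tr (P *m Pi) by apply: mulr_ge0 => //; rewrite subr_ge0 ltW.
have rK' : n%:R <= (\rank K)%:R + M%:R :> R by rewrite -natrD ler_nat.
have h6 : 0 <= c' * ((\rank K)%:R + M%:R - n%:R) by apply: mulr_ge0 => //; rewrite subr_ge0.
rewrite e1 GPQ in hE.
rewrite trQPi trQ trPi trGQ' in h2.
have [hX hb] : \tr (X2 *m X2^T) = 0 /\ (c - c') * \tr (P *m Pi) = 0.
  set a2 := \tr (P *m Pi) in h1 h2 h4 h5 hE *.
  set t3 := \tr (X2 *m X2^T) in h3 hE *.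
  set u := \tr (G *m P *m Pi) in h1 hE.
  set v := \tr (G *m Q *m Pi) in h2 hE.
  set r := (\rank K)%:R in h2 h6 hE.
  have e : t3 + (c - c') * a2 + (u - c * a2) - (target - v - c' * (n%:R - M%:R - (r - a2))) + c' * (r + M%:R - n%:R) = 0.
    rewrite -hE; ring.
  split; lra.
have a20 : \tr (P *m Pi) = 0.
  by move: hb => /eqP; rewrite mulf_eq0 subr_eq0 (gt_eqF gap) /= => /eqP.
have PiP : Pi *m P = 0 by apply: tr_AAt_eq0; rewrite trPP.
have X20 := tr_AAt_eq0 hX.
have /row_fullP [Einv hEinv] := fT.
have DPi : (B - 1%:M) *m (1%:M - Pi) = 0.
  move: X20; rewrite /X2 -mulmxA => h.
  have h' := congr1 (mulmx Einv) h.
  by rewrite mulmx0 (mulmxA Einv Tm) hEinv mul1mx in h'.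
have BP : B *m P = P.
  have : B = 1%:M - Pi.
    move: DPi; rewrite mulmxBr mulmx1 mulmxBl mul1mx BPi sub0r opprK => h.
    apply: (canRL (addrK Pi)); apply/eqP.
    by rewrite -subr_eq0 addrAC h.
  by move=> ->; rewrite mulmxBl mul1mx PiP subr0.
rewrite -sP -BP eB -mulmxA trmx_mul.
by apply: submxMl.
Qed.

Lemma bwd (We : 'M[R]_(n, M)) (Wd : 'M[R]_(M, n)) :
  We *m Wd = P ->
  \tr ((Tm *m We *m Wd - Tm) *m (Tm *m We *m Wd - Tm)^T) = target.
Proof.
move=> hP.
have -> : Tm *m We *m Wd - Tm = - (Tm *m (1%:M - P)).
  by rewrite -mulmxA hP mulmxBr mulmx1 opprB.
have sQ : (1%:M - P)^T = 1%:M - P by rewrite linearB /= trmx1 sP.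
have iQ : (1%:M - P) *m (1%:M - P) = 1%:M - P.
  by rewrite mulmxBr mulmx1 mulmxBl mul1mx iP subrr subr0.
rewrite linearN /= mulNmx mulmxN opprK trmx_mul sQ mulmxA -(mulmxA Tm) iQ.
by rewrite mxtrace_mulC mulmxA -trGQ mxtrace_mulC.
Qed.
End Core2.

Section Main.
Variable R : realFieldType.
Variables (dd n' M : nat) (Tm : 'M[R]_(dd, n'.+1)) (lam : 'I_(n'.+1) -> R).
Hypotheses (rk : \rank Tm = n'.+1) (M1 : (1 <= M)%N) (MT : (M < n'.+1)%N)
 (cp : char_poly (Tm^T *m Tm) = \prod_(i < n'.+1) ('X - (lam i)%:P))
 (mono : forall i j : 'I_(n'.+1), (i <= j)%N -> lam j <= lam i)
 (gapH : forall i j : 'I_(n'.+1), (i : nat) = M.-1 -> (j : nat) = M -> lam j < lam i).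

Let MT' : (M.-1 < n'.+1)%N. Proof. exact: leq_ltn_trans (leq_pred M) MT. Qed.
Let c := lam (Ordinal MT').
Let c' := lam (Ordinal MT).
Let lam_top : forall i : 'I_(n'.+1), (i < M)%N -> c <= lam i.
Proof. by move=> i iM; apply: mono => /=; lia. Qed.
Let lam_bot : forall i : 'I_(n'.+1), (M <= i)%N -> lam i <= c'.
Proof. by move=> i iM; apply: mono. Qed.
Let gap : c' < c. Proof. exact: gapH. Qed.
Let sG : (Tm^T *m Tm)^T = Tm^T *m Tm. Proof. by rewrite trmx_mul trmxK. Qed.
Let psd : forall v : 'rV[R]_(n'.+1), 0 <= \tr (v *m (Tm^T *m Tm) *m v^T).
Proof.
move=> v; have -> : v *m (Tm^T *m Tm) *m v^T = (v *m Tm^T) *m (v *m Tm^T)^T.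
  by rewrite trmx_mul trmxK !mulmxA.
exact: tr_AAt_ge0.
Qed.
Let fT : row_full Tm. Proof. by rewrite /row_full rk. Qed.

Lemma main_fwd (We : 'M[R]_(n'.+1, M)) (Wd : 'M[R]_(M, n'.+1)) :
  \tr ((Tm *m We *m Wd - Tm) *m (Tm *m We *m Wd - Tm)^T)
    = \sum_(i < n'.+1 | (M <= i)%N) lam i ->
  row_free We^T /\ (We^T <= \sum_(i < n'.+1 | (i < M)%N) eigenspace (Tm^T *m Tm) (lam i))%MS.
Proof.
move=> hE.
have [W [d [uW WG pd]]] := sym_diag sG cp.
have c'0 : 0 <= c' by apply: (lam_ge0 uW WG pd psd).
have leMn : (M <= n'.+1)%N by apply: ltnW.
have sub := fwd fT (P_sym _ _ _) (P_idem _ _ _) (PG sG uW WG pd lam_top lam_bot gap)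
  (trP sG uW WG pd lam_top lam_bot gap leMn) (trGQ sG uW WG pd lam_top lam_bot gap)
  (K3 sG uW WG pd lam_top lam_bot gap) (K4 sG uW WG pd lam_top lam_bot gap) gap c'0 hE.
have PS' := PS (Tm^T *m Tm) lam M.
have rP : \rank (proj (row_base (\sum_(i < n'.+1 | (i < M)%N) eigenspace (Tm^T *m Tm) (lam i))%MS)) = M.
  by rewrite (eqmx_rank PS') (rankS sG uW WG pd lam_top lam_bot gap leMn).
have rW : (\rank We^T <= M)%N by apply: rank_leq_row.
have [_ b] := mxrank_leqif_sup sub.
have rW2 : (M <= \rank We^T)%N by rewrite -{1}rP mxrankS.
have WP : (We^T <= proj (row_base (\sum_(i < n'.+1 | (i < M)%N) eigenspace (Tm^T *m Tm) (lam i))%MS))%MS.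
  by rewrite -b rP eqn_leq rW rW2.
split; first by rewrite /row_free eqn_leq rW rW2.
by case/andP: PS' => h _; apply: submx_trans WP h.
Qed.

Lemma main_bwd (X : 'M[R]_(M, n'.+1)) (r : 'rV[R]_M) :
  row_free X -> (X <= \sum_(i < n'.+1 | (i < M)%N) eigenspace (Tm^T *m Tm) (lam i))%MS ->
  (forall m, r 0 m != 0) ->
  \tr ((Tm *m (X^T *m diag_mx r) *m (diag_mx (\row_m (r 0 m)^-1) *m invmx (X *m X^T) *m X) - Tm)
     *m (Tm *m (X^T *m diag_mx r) *m (diag_mx (\row_m (r 0 m)^-1) *m invmx (X *m X^T) *m X) - Tm)^T)
    = \sum_(i < n'.+1 | (M <= i)%N) lam i.
Proof.
move=> fX sX rn0.
have [W [d [uW WG pd]]] := sym_diag sG cp.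
have leMn : (M <= n'.+1)%N by apply: ltnW.
apply: (bwd (P_sym _ _ _) (P_idem _ _ _) (trGQ sG uW WG pd lam_top lam_bot gap)).
have -> : X^T *m diag_mx r *m (diag_mx (\row_m (r 0 m)^-1) *m invmx (X *m X^T) *m X) = proj X.
  rewrite /proj !mulmxA -(mulmxA _ (diag_mx r)) mulmx_diag.
  have -> : diag_mx (\row_j (r 0 j * (\row_m (r 0 m)^-1) 0 j)) = 1%:M.
    apply/matrixP => i j; rewrite !mxE mulfV //.
  by rewrite mulmx1.
apply: proj_uniq => //; first exact: row_base_free.
have sY : (X <= row_base (\sum_(i < n'.+1 | (i < M)%N) eigenspace (Tm^T *m Tm) (lam i))%MS)%MS.
  by rewrite eq_row_base.
have [_ <-] := mxrank_leqif_eq sY.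
rewrite eq_row_base (rankS sG uW WG pd lam_top lam_bot gap leMn).
by move: fX; rewrite /row_free.
Qed.
End Main.


Unset Implicit Arguments.

Lemma frob2_tr (R : realType) m n (X : 'M[R]_(m, n)) : frob2 X = \tr (X *m X^T).
Proof. by rewrite tr_AAt. Qed.

Theorem mainTheorem3 (R : realType) (d Tn M : nat) (Tm : 'M[R]_(d, Tn))
  (kappa : R) (lam : 'I_Tn -> R) :
  \rank Tm = Tn ->
  (1 <= M)%N -> (M < Tn)%N ->
  0 < kappa ->
  (* lam lists the eigenvalues of G = Tm^T Tm with multiplicity, nonincreasing *)
  char_poly (Tm^T *m Tm) = \prod_(i < Tn) ('X - (lam i)%:P) ->
  (forall i j : 'I_Tn, (i <= j)%N -> lam j <= lam i) ->
  (* spectral gap lambda_M > lambda_{M+1} (1-indexed) *)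
  (forall i j : 'I_Tn, (i : nat) = M.-1 -> (j : nat) = M -> lam j < lam i) ->
  (exists (A : 'M[R]_(Tn, M)) (Wd : 'M[R]_(M, Tn)),
      frob2 (Tm *m softmax_enc kappa A *m Wd - Tm)
      = \sum_(i < Tn | (M <= i)%N) lam i)
  <->
  (exists X : 'M[R]_(M, Tn),
      row_free X /\
      (X <= top_eigenspace (Tm^T *m Tm) lam M)%MS /\
      (forall (m : 'I_M) (j : 'I_Tn), 0 < X m j)).
Proof.
move=> rk M1 MT kp cp mono gapH.
case: Tn Tm lam rk MT cp mono gapH => [|n'] Tm lam rk MT cp mono gapH.
  by [].
have sum_pos : forall (f : 'I_(n'.+1) -> R), (forall k, 0 < f k) -> 0 < \sum_k f k.
  move=> f fp; apply: (lt_le_trans (fp ord0)).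
  rewrite (bigD1 ord0) //= lerDl; apply: sumr_ge0 => k _; apply: ltW; apply: fp.
split.
- move=> [A [Wd hE]]; rewrite frob2_tr in hE.
  have [fW sW] := main_fwd rk M1 MT cp mono gapH hE.
  exists (softmax_enc kappa A)^T; split => //; split => //.
  move=> m j; rewrite !mxE; apply: divr_gt0; first exact: expR_gt0.
  by apply: sum_pos => k; apply: expR_gt0.
- move=> [X [fX [sX pX]]].
  set r := \row_m (\sum_k X m k)^-1.
  have rn0 : forall m, r 0 m != 0.
    by move=> m; rewrite mxE invr_eq0 gt_eqF //; apply: sum_pos.
  exists (\matrix_(j, m) (kappa * ln (X m j))),
    (diag_mx (\row_m (r 0 m)^-1) *m invmx (X *m X^T) *m X).
  have eE : forall m j, expR (kappa * ln (X m j) / kappa) = X m j.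
    by move=> m j; rewrite mulrC mulKf ?gt_eqF // lnK // posrE.
  have eW : softmax_enc kappa (\matrix_(j, m) (kappa * ln (X m j))) = X^T *m diag_mx r.
    apply/matrixP => j m; rewrite mul_mx_diag !mxE eE.
    by under eq_bigr do rewrite mxE eE.
  rewrite frob2_tr eW; exact: main_bwd.
Qed.
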